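(* Let $g\ge0$, $n\ge1$, $G\in\mathbb{G}_{g,n}$, and let $T_1,T_2$ be tails of $G$. If $T_1\cap T_2\ne\emptyset$, then either one of $T_1,T_2$ contains the other, or $T_1\cup T_2=G$.
   Context: $\mathbb{G}_{g,n}$ is the set of isomorphism classes of dual graphs of stable $n$-pointed curves of genus $g$: connected graphs with vertex genera and $n$ labelled legs, of total genus $g$, each vertex stable. A tail of $G$ is a connected vertex-induced subgraph $T$ (i.e. determined by a vertex set, containing all edges of $G$ with both ends in it and the legs rooted in it) that is joined to its complement by exactly one edge of $G$. *)

(* Defs.v *)
From mathcomp Require Import all_boot.
Set Implicit Arguments. Unset Strict Implicit. Unset Printing Implicit Defensive.

(* A (representative of a) dual graph of a stable n-pointed curve.
   Vertices: finite type sg_V; edges: finite type sg_E, each edge e has two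
   endpoints sg_ends e (a loop has equal endpoints; multiple edges allowed);
   vertex genera sg_genus; the n labelled legs are attached via sg_leg. *)
Record sgraph (n : nat) := SGraph {
  sg_V : finType;
  sg_E : finType;
  sg_ends : sg_E -> sg_V * sg_V;
  sg_genus : sg_V -> nat;
  sg_leg : 'I_n -> sg_V
}.

Section Defs.
Variable n : nat.
Variable G : sgraph n.
Local Notation V := (sg_V G).
Local Notation E := (sg_E G).

Definition sg_adj : rel V := fun u w =>
  [exists e : E, (sg_ends e == (u, w)) || (sg_ends e == (w, u))].

(* valence = number of half-edges (loops count twice) plus legs at v *)
Definition sg_val (v : V) : nat :=
  #|[set e : E | (sg_ends e).1 == v]| + #|[set e : E | (sg_ends e).2 == v]|
  + #|[set i : 'I_n | @sg_leg n G i == v]|.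

Definition sg_connected : Prop := forall u w : V, connect sg_adj u w.

(* stability of every vertex: 2 h(v) - 2 + val(v) > 0 *)
Definition sg_stable : Prop := forall v : V, 3 <= 2 * sg_genus v + sg_val v.

(* total genus: g = b_1(G) + sum_v h(v), with b_1 = #E - #V + 1 (G connected) *)
Definition sg_total_genus (g : nat) : Prop :=
  g + #|V| = #|E| + 1 + \sum_(v : V) sg_genus v.

Definition in_Ggn (g : nat) : Prop :=
  0 < #|V| /\ sg_connected /\ sg_stable /\ sg_total_genus g.

Definition induced_connected (S : {set V}) : Prop :=
  S != set0 /\
  forall u w, u \in S -> w \in S ->
    connect [rel x y | [&& x \in S, y \in S & sg_adj x y]] u w.

Definition cut_size (S : {set V}) : nat :=
  #|[set e : E | ((sg_ends e).1 \in S) != ((sg_ends e).2 \in S)]|.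

(* a tail: connected vertex-induced subgraph joined to its complement by
   exactly one edge; identified with its vertex set *)
Definition is_tail (S : {set V}) : Prop :=
  induced_connected S /\ cut_size S = 1.

End Defs.

(* Main.v *)
Require Import Defs.
From mathcomp Require Import all_boot.

Lemma cross_step (T : finType) (r : rel T) (P : pred T) u w :
  connect r u w -> P u -> ~~ P w -> exists x y, [/\ r x y, P x & ~~ P y].
Proof.
move/connectP=> [p pth ->]; elim: p u pth => [|z p IH] u /= pth Pu Pw.
  by rewrite Pu in Pw.
case/andP: pth => ruz pth; case Pz: (P z); first exact: IH pth Pz Pw.
by exists u, z; rewrite Pz.
Qed.

Lemma adj_edge n (G : sgraph n) (x y : sg_V G) : sg_adj x y ->
  exists e, ((sg_ends e).1 = x /\ (sg_ends e).2 = y) \/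
            ((sg_ends e).1 = y /\ (sg_ends e).2 = x).
Proof.
case/existsP=> e /orP[] /eqP E; exists e; rewrite E; [left|right]; done.
Qed.

Lemma cut_uniq n (G : sgraph n) (S : {set sg_V G}) e f :
  cut_size S = 1 ->
  ((sg_ends e).1 \in S) != ((sg_ends e).2 \in S) ->
  ((sg_ends f).1 \in S) != ((sg_ends f).2 \in S) -> e = f.
Proof.
rewrite /cut_size => /eqP/cards1P [z Hz] He Hf.
have: e \in [set z] by rewrite -Hz inE.
have: f \in [set z] by rewrite -Hz inE.
by rewrite !inE => /eqP -> /eqP ->.
Qed.

Theorem lemma4p13 (g n : nat) (G : sgraph n) (T1 T2 : {set sg_V G}) :
  1 <= n -> in_Ggn G g -> is_tail T1 -> is_tail T2 ->
  T1 :&: T2 != set0 ->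
  T1 \subset T2 \/ T2 \subset T1 \/ T1 :|: T2 = [set: sg_V G].
Proof.
move=> _ [_ [conn _]] [[_ C1] k1] [[_ C2] k2] /set0Pn [a].
rewrite inE => /andP [a1 a2].
case s12: (T1 \subset T2); first by left.
case s21: (T2 \subset T1); first by right; left.
right; right; apply/eqP; rewrite eqEsubset subsetT /=.
apply/negPn/negP => /subsetPn [d _]; rewrite inE negb_or => /andP [d1 d2].
move/negbT/subsetPn: s12 => [b b1 b2].
move/negbT/subsetPn: s21 => [c c2 c1'].
have [x [y [/= /and3P [x1 y1 axy] x2 y2]]] :=
  cross_step _ _ (fun z => z \in T2) _ _ (C1 a b a1 b1) a2 b2.
have [y' [x' [/= /and3P [y2' x2' ayx] y1' x1']]] :=
  cross_step _ _ (fun z => z \in T1) _ _ (C2 a c a2 c2) a1 c1'.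
have aU : a \in T1 :|: T2 by rewrite inE a1.
have dU : d \notin T1 :|: T2 by rewrite inE negb_or d1 d2.
have [u [v [/= auv uU vU]]] :=
  cross_step _ _ (fun z => z \in (T1 :|: T2)) _ _ (conn a d) aU dU.
move: vU; rewrite inE negb_or => /andP [v1 v2].
have [e He] := adj_edge _ _ _ _ axy.
have [f Hf] := adj_edge _ _ _ _ ayx.
have [h Hh] := adj_edge _ _ _ _ auv.
have eT2 : ((sg_ends e).1 \in T2) != ((sg_ends e).2 \in T2).
  by case: He => [[-> ->]|[-> ->]]; rewrite x2 (negbTE y2).
have eT1 : ((sg_ends e).1 \in T1) = ((sg_ends e).2 \in T1).
  by case: He => [[-> ->]|[-> ->]]; rewrite x1 y1.
have fT1 : ((sg_ends f).1 \in T1) != ((sg_ends f).2 \in T1).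
  by case: Hf => [[-> ->]|[-> ->]]; rewrite y1' (negbTE x1').
have fT2 : ((sg_ends f).1 \in T2) = ((sg_ends f).2 \in T2).
  by case: Hf => [[-> ->]|[-> ->]]; rewrite y2' x2'.
move: uU; rewrite inE => /orP [u1|u2].
- have hT1 : ((sg_ends h).1 \in T1) != ((sg_ends h).2 \in T1).
    by case: Hh => [[-> ->]|[-> ->]]; rewrite u1 (negbTE v1).
  have hf := cut_uniq _ _ _ _ _ k1 hT1 fT1; subst h.
  have [f1 f2] : (sg_ends f).1 \in T2 /\ (sg_ends f).2 \in T2.
    by case: Hf => [[-> ->]|[-> ->]].
  by case: Hh => [[_ E]|[E _]]; [move: f2|move: f1]; rewrite E (negbTE v2).
- have hT2 : ((sg_ends h).1 \in T2) != ((sg_ends h).2 \in T2).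
    by case: Hh => [[-> ->]|[-> ->]]; rewrite u2 (negbTE v2).
  have he := cut_uniq _ _ _ _ _ k2 hT2 eT2; subst h.
  have [e1 e2] : (sg_ends e).1 \in T1 /\ (sg_ends e).2 \in T1.
    by case: He => [[-> ->]|[-> ->]].
  by case: Hh => [[_ E]|[E _]]; [move: e2|move: e1]; rewrite E (negbTE v1).
Qed.
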